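(* Let $(\mathbb S,+,\cdot)$ be an S-Field. Then for every $\alpha\in\mathbb S_0$ with $\alpha\neq0$, $\frac{\alpha}{0}=q_0^*(\alpha)$ exists and is a unique element, and distinct such $\alpha$ give distinct values: if $\alpha,\beta\in\mathbb S_0\setminus\{0\}$ and $\alpha\neq\beta$ then $\frac{\alpha}{0}\neq\frac{\beta}{0}$.
   Context: An S-Structure is a triple $(\mathbb S,+,\cdot)$ where $\mathbb S$ is a set and $+,\cdot$ are binary operations on $\mathbb S$ such that: $(\mathbb S,+)$ is a commutative group with identity $0$ (the inverse of $s$ is written $-s$, and $s-t:=s+(-t)$); $\mathbb S$ is closed under $\cdot$; and there exists $s\in\mathbb S$ with $0\cdot s\neq 0$ or $s\cdot 0\neq 0$. Multiplication binds tighter than addition. The structures considered come with a distinguished element of $\mathbb S$ denoted $1$. It is Commutative if $s\cdot t=t\cdot s$ for all $s,t$. For a Commutative S-Structure and $\alpha\in\mathbb S$, put $\mathbb S_\alpha=\{s\in\mathbb S:0\cdot s=s\cdot 0=\alpha\}$ and $\Lambda=\{\alpha\in\mathbb S:\mathbb S_\alpha\neq\emptyset\}$. Wheel Distributive: $s\cdot(t+r)+(s\cdot 0)=(s\cdot t)+(s\cdot r)$ for all $s,t,r\in\mathbb S$. S-Associative: for all $m,n\in\mathbb S_0$ and $s\in\mathbb S$, $m\cdot(n\cdot s)=(m\cdot n)\cdot s-([(m-1)\cdot(n-1)]\cdot(0\cdot s))$. Base: if $\mathbb S_0\neq\emptyset$ and $\alpha\in\Lambda$, $q\in\mathbb S_\alpha$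 is a Base for $\mathbb S_\alpha$ if $q+\beta\in\mathbb S_\alpha$ for all $\beta\in\mathbb S_0$ and every $s\in\mathbb S_\alpha$ equals $q+\beta$ for some $\beta\in\mathbb S_0$. Coordinated: $\mathbb S_0\neq\emptyset$ and every $\mathbb S_\alpha$ with $\alpha\in\Lambda$ has a Base. Standard Bases: a Coordinated Commutative S-Structure has Standard Bases if there is a specified element $q_0(1)\in\mathbb S_1$ which is a Base for $\mathbb S_1$, and for every $\alpha\in\Lambda$ the element $q_0(\alpha):=\alpha\cdot(q_0(1)+1)-1$ lies in $\mathbb S_\alpha$ and is a Base for $\mathbb S_\alpha$. An Essential S-Structure is an S-Structure that is Commutative, Wheel Distributive, S-Associative, has Standard Bases (in particular is Coordinated), satisfies $0,1\in\mathbb S_0$, and satisfies $\mathbb S_0=\{1\cdot x:x\in\mathbb S_0\}$. A Unity is an element $e\in\Lambda$ with $e\cdot s=s\cdot e=s$ for all $s\in\mathbb S$. Scalar Inverses: the structure has a Unity $e$ and for every $x\in\mathbb S_0$ with $x\neq 0$ there is $x^{-1}\in\mathbb S_0$ with $x\cdot x^{-1}=x^{-1}\cdot x=e$. An S-Ring is an Essential S-Structure with a Unity; an S-Field is an S-Ring with Scalar Inverses. Reversible: for $\alpha\in\Lambda$, $q_0(\alpha)$ is Reversible if there exists $\alpha^*\in\Lambda$ with $q_0(1)=\alpha^*\cdot(q_0(\alpha)+\alpha)-\alpha$; then $q_0^*(\alpha):=q_0(\alpha)$. Division By Zero: in an S-Field, for $\alpha\in\mathbb S_0$ with $\alpha\neq0$,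 $\frac{\alpha}{0}:=q_0^*(\alpha)$. *)

(* Defs.v *)
(* the additive group (S,+) is a zmodType; the multiplication
   is an arbitrary binary operation [mul], the distinguished element is [one],
   and the specified element q_0(1) is [q01]. *)
From mathcomp Require Import all_boot all_algebra.
Set Implicit Arguments. Unset Strict Implicit. Unset Printing Implicit Defensive.
Import GRing.Theory.
Local Open Scope ring_scope.

Section SStructures.
Variables (S : zmodType) (mul : S -> S -> S) (one : S) (q01 : S).

(* S-Structure: (S,+) commutative group (given by zmodType), closure under
   mul is given by typing, and some s with 0*s <> 0 or s*0 <> 0. *)
Definition is_SStructure : Prop :=
  exists s : S, mul 0 s <> 0 \/ mul s 0 <> 0.

Definition is_Commutative : Prop := forall s t, mul s t = mul t s.

Definition Sa (alpha s : S) : Prop := mul 0 s = alpha /\ mul s 0 = alpha.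

Definition Lambda (alpha : S) : Prop := exists s, Sa alpha s.

Definition is_WheelDistributive : Prop :=
  forall s t r, mul s (t + r) + mul s 0 = mul s t + mul s r.

Definition is_SAssociative : Prop :=
  forall m n s, Sa 0 m -> Sa 0 n ->
    mul m (mul n s) = mul (mul m n) s - mul (mul (m - one) (n - one)) (mul 0 s).

Definition is_Base (alpha q : S) : Prop :=
  Sa alpha q /\
  (forall beta, Sa 0 beta -> Sa alpha (q + beta)) /\
  (forall s, Sa alpha s -> exists beta, Sa 0 beta /\ s = q + beta).

Definition is_Coordinated : Prop :=
  (exists x, Sa 0 x) /\ forall alpha, Lambda alpha -> exists q, is_Base alpha q.

Definition q0 (alpha : S) : S := mul alpha (q01 + one) - one.

Definition has_StandardBases : Prop :=
  is_Coordinated /\ Sa one q01 /\ is_Base one q01 /\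
  forall alpha, Lambda alpha -> Sa alpha (q0 alpha) /\ is_Base alpha (q0 alpha).

Definition is_Essential : Prop :=
  is_SStructure /\ is_Commutative /\ is_WheelDistributive /\ is_SAssociative /\
  has_StandardBases /\ Sa 0 0 /\ Sa 0 one /\
  (forall s, Sa 0 s <-> exists x, Sa 0 x /\ s = mul one x).

Definition is_Unity (e : S) : Prop :=
  Lambda e /\ forall s, mul e s = s /\ mul s e = s.

Definition has_ScalarInverses : Prop :=
  exists e, is_Unity e /\
    forall x, Sa 0 x -> x <> 0 ->
      exists y, Sa 0 y /\ mul x y = e /\ mul y x = e.

Definition is_SRing : Prop := is_Essential /\ exists e, is_Unity e.

Definition is_SField : Prop := is_SRing /\ has_ScalarInverses.

Definition Reversible (alpha : S) : Prop :=
  Lambda alpha /\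
  exists alpha_star, Lambda alpha_star /\
    q01 = mul alpha_star (q0 alpha + alpha) - alpha.

(* alpha/0 := q_0^*(alpha) = q_0(alpha); it is defined when alpha is in S_0,
   alpha <> 0 and q_0(alpha) is Reversible. *)
Definition div0_defined (alpha : S) : Prop :=
  Sa 0 alpha /\ alpha <> 0 /\ Reversible alpha.

Definition div0 (alpha : S) : S := q0 alpha.

End SStructures.

(* Main.v *)
Require Import Defs.
From mathcomp Require Import all_boot all_algebra.
Local Open Scope ring_scope.
Import GRing.Theory.

Section Proofs.
Variables (S : zmodType) (mul : S -> S -> S) (one q01 : S).
Hypothesis Comm : is_Commutative mul.
Hypothesis WD : is_WheelDistributive mul.
Hypothesis SA : is_SAssociative mul one.
Hypothesis S00 : Sa mul 0 0.
Hypothesis S0one : Sa mul 0 one.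
Hypothesis Sq01 : Sa mul one q01.
Hypothesis Ess : forall s, Sa mul 0 s <-> exists x, Sa mul 0 x /\ s = mul one x.

Lemma madd a : mul a 0 = 0 -> forall t r, mul a (t + r) = mul a t + mul a r.
Proof. move=> H t r; have := WD a t r; by rewrite H addr0. Qed.

Lemma mopp a : mul a 0 = 0 -> forall t, mul a (- t) = - mul a t.
Proof.
move=> H t; apply/eqP; rewrite -subr_eq0 opprK -madd // addNr //.
by rewrite H.
Qed.

Lemma msub a : mul a 0 = 0 -> forall t r, mul a (t - r) = mul a t - mul a r.
Proof. by move=> H t r; rewrite madd // mopp. Qed.

Lemma S0_r a : Sa mul 0 a -> mul a 0 = 0.
Proof. by case. Qed.

Lemma S0_of a : mul 0 a = 0 -> Sa mul 0 a.
Proof. by move=> H; split=> //; rewrite Comm. Qed.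

Lemma Z0 : mul 0 0 = 0.
Proof. by case: S00. Qed.

Lemma S0sub a b : Sa mul 0 a -> Sa mul 0 b -> Sa mul 0 (a - b).
Proof.
move=> [Ha _] [Hb _]; apply: S0_of; by rewrite msub ?Z0 // Ha Hb subr0.
Qed.

Lemma S0opp a : Sa mul 0 a -> Sa mul 0 (- a).
Proof. move=> [Ha _]; apply: S0_of; by rewrite mopp ?Z0 // Ha oppr0. Qed.

Lemma S0mul1 x : Sa mul 0 x -> Sa mul 0 (mul one x).
Proof. move=> Hx; apply/Ess; by exists x. Qed.

Lemma unity_one e : is_Unity mul e -> e = one.
Proof.
move=> [_ He].
have Se : Sa mul 0 e by apply: S0_of; rewrite Comm; case: (He 0).
have [x [Sx ex]] := (iffLR (Ess e)) Se.
set w := mul one one.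
have Sw : Sa mul 0 w by apply: S0mul1.
have y0 : Sa mul 0 (e - one) by apply: S0sub.
have oe : mul one e = one by rewrite Comm; case: (He one).
have eq1 : forall m, Sa mul 0 m -> mul one (mul (m - one) (e - one)) = 0.
  move=> m Sm; have := SA m e q01 Sm Se.
  have [-> _] := He q01; have [_ ->] := He m; case: Sq01 => -> _.
  move=> h; move: h; rewrite -{1}(addr0 (mul m q01)) => /addrI /eqP.
  by rewrite eq_sym oppr_eq0 Comm => /eqP.
have oo : forall m, Sa mul 0 m -> mul one (mul one m) = mul w m.
  move=> m [Zm _]; have := SA one one m S0one S0one.
  by rewrite subrr Z0 Zm Z0 subr0.
have comp : forall m, Sa mul 0 m ->
   mul (m - one) (e - one) = m - mul one m - (one - w).
  move=> m Sm; rewrite Comm msub; last by apply: S0_r.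
  rewrite Comm msub; last by apply: S0_r.
  rewrite [mul (e - one) one]Comm msub; last by case: S0one => _ ->.
  by rewrite oe -/w [mul m one]Comm; have [_ ->] := He m.
have h0 := eq1 0 S00; rewrite comp // in h0.
have hx := eq1 x Sx; rewrite comp // in hx.
have m1 : mul one 0 = 0 by case: S0one.
rewrite !msub // !m1 subr0 sub0r -/w in h0.
have hw : mul one w = w.
  by move/eqP: h0; rewrite oppr_eq0 subr_eq0 eq_sym => /eqP.
rewrite !msub // -ex oe -/w hw subrr subr0 in hx.
by apply/eqP; rewrite -subr_eq0; apply/eqP.
Qed.

Hypothesis Hone : forall s, mul one s = s.

Lemma Hone' s : mul s one = s.
Proof. by rewrite Comm Hone. Qed.

Lemma Lam_of a : Sa mul 0 a -> Sa mul a (mul a q01).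
Proof.
move=> Sa0; have [Za ar] := Sa0.
suff h : mul 0 (mul a q01) = a by split=> //; rewrite Comm.
have := SA 0 a q01 S00 Sa0; rewrite Za; case: Sq01 => -> _.
rewrite Hone' => ->.
rewrite sub0r [mul (- one) _]Comm mopp; last by apply: S0_r; apply: S0sub.
by rewrite Hone' opprK addrC subrK.
Qed.

Lemma Zq0 a : Sa mul 0 a -> mul 0 (q0 mul one q01 a) = a.
Proof.
move=> Sa0; have [Za ar] := Sa0.
rewrite /q0 (@msub 0 Z0) (@madd a ar) (@madd 0 Z0) Hone'.
have [-> _] := @Lam_of a Sa0; case: S0one => -> _.
by rewrite Za addr0 subr0.
Qed.

End Proofs.

Theorem theorem4p2p3 (S : zmodType) (mul : S -> S -> S) (one q01 : S) :
  is_SField mul one q01 ->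
  (forall alpha : S, Sa mul 0 alpha -> alpha <> 0 ->
     div0_defined mul one q01 alpha /\
     exists! x : S, x = div0 mul one q01 alpha) /\
  (forall alpha beta : S, Sa mul 0 alpha -> alpha <> 0 ->
     Sa mul 0 beta -> beta <> 0 -> alpha <> beta ->
     div0 mul one q01 alpha <> div0 mul one q01 beta).
Proof.
move=> [[Hess _] [e [Ue Inv]]].
case: Hess => _ [Comm [WD [SA [HSB [S00 [S0one Ess]]]]]].
case: HSB => _ [Sq01 _].
have ee := @unity_one S mul one q01 Comm WD SA S00 S0one Sq01 Ess e Ue.
subst e.
have Hone : forall s, mul one s = s by move=> s; case: Ue => _ /(_ s) [].
have Zq := @Zq0 S mul one q01 Comm WD SA S00 S0one Sq01 Hone.
have Lo := @Lam_of S mul one q01 Comm WD SA S00 S0one Sq01 Hone.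
split; last first.
  move=> a b Sa0 _ Sb0 _ nab eq; apply: nab.
  by have := congr1 (mul 0) eq; rewrite /div0 Zq // Zq.
move=> a Sa0 a0; split; last by exists (div0 mul one q01 a); split.
split=> //; split=> //.
have La : Lambda mul a by exists (mul a q01); apply: Lo.
split=> //.
have [y [Sy [ay ya]]] := Inv a Sa0 a0.
exists y; split; first by exists (mul y q01); apply: Lo.
have [Za ar] := Sa0; have [Zy yr] := Sy.
have Z00 : mul 0 0 = 0 by case: S00.
have md := @madd S mul WD; have ms := @msub S mul WD.
have H1 : forall s, mul s one = s by move=> s; rewrite Comm Hone.
have ym : mul (y - one) 0 = 0.
  by rewrite Comm (ms 0 Z00) Zy; case: S0one => -> _; rewrite subr0.
have K : mul (y - one) (a - one) = one - a - (y - one).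
  by rewrite (ms _ ym) H1 Comm (ms _ ar) ay H1.
have Z1 : mul 0 (q01 + one) = one.
  by rewrite (md 0 Z00); case: Sq01 => -> _; case: S0one => -> _; rewrite addr0.
rewrite /q0 (md y yr) (ms y yr) ya H1 (SA y a (q01 + one) Sy Sa0) ya Hone Z1 H1 K.
rewrite !opprB !addrA (addrAC q01 one y) addrK.
rewrite (addrAC (q01 + y + a) (- one) (- y)) subrK (addrAC q01 y a) addrK addrK.
by [].
Qed.
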